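(* For every $q\in X^*\setminus\{e\}$: $Q_q=P_q^*\cdot q\cup\{e\}\subseteq P_q^*$, and $\mathrm{pref}(P_q^* )=\mathrm{pref}(Q_q)=P_q^*\cdot\mathrm{pref}(q)$.
   Context: $X$ is a finite alphabet with $|X|\ge 2$; $X^*$ the finite words (empty word $e$). $w\sqsubseteq\eta$ means $w$ is a prefix of $\eta$, $w\sqsubset\eta$ a proper prefix. For languages $L$, $L^*=\bigcup_{i\in\mathbb{N}}L^i$; concatenation extends to sets. $\mathrm{pref}(B)$ is the set of finite prefixes of elements of $B$. A word $\eta$ is quasiperiodic with quasiperiod $q\in X^*\setminus\{e\}$ if for every natural number $j<|\eta|$ there is a prefix $u_j\sqsubseteq\eta$ with $j-|q|<|u_j|\le j$ and $u_j\cdot q\sqsubseteq\eta$. $Q_q$ is the set of finite words quasiperiodic with quasiperiod $q$ (including $e$). $P_q:=\{v: e\sqsubset v\sqsubseteq q\sqsubset v\cdot q\}$. *)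

(* Defs.v *)
From mathcomp Require Import all_boot.
Set Implicit Arguments. Unset Strict Implicit. Unset Printing Implicit Defensive.

Section Words.
Variable X : finType.
Definition lang := seq X -> Prop.

Definition lcat (L M : lang) : lang :=
  fun w => exists u v, L u /\ M v /\ w = u ++ v.

Fixpoint lpow (L : lang) (i : nat) : lang :=
  match i with
  | 0 => fun w => w = [::]
  | i.+1 => lcat (lpow L i) L
  end.

Definition lstar (L : lang) : lang := fun w => exists i, lpow L i w.

Definition lsing (q : seq X) : lang := fun w => w = q.

Definition lpref (B : lang) : lang := fun w => exists eta, B eta /\ prefix w eta.

Definition leq_lang (L M : lang) : Prop := forall w, L w <-> M w.
Definition lsub (L M : lang) : Prop := forall w, L w -> M w.

(* eta is quasiperiodic with quasiperiod q: for every j < |eta| there is a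
   prefix u_j of eta with j - |q| < |u_j| <= j and u_j q prefix of eta.
   (j - |q| < |u_j| is written j < |u_j| + |q| to avoid truncated subtraction.) *)
Definition quasiperiodic (q eta : seq X) : Prop :=
  forall j, j < size eta ->
    exists u, [/\ prefix u eta, j < size u + size q, size u <= j
                & prefix (u ++ q) eta].

Definition Qq (q : seq X) : lang := fun w => quasiperiodic q w.

Definition Pq (q : seq X) : lang :=
  fun v => [/\ v != [::], prefix v q & (prefix q (v ++ q) /\ q != v ++ q)].
End Words.

(* Main.v *)
Require Import Defs.
From mathcomp Require Import all_boot.
From Stdlib Require Import Lia.
Set Implicit Arguments. Unset Strict Implicit. Unset Printing Implicit Defensive.

Ltac szfix := idtac.
Ltac slia :=
  intros; rewrite /=;
  try (first [apply/ltP | apply/leP | match goal with |- is_true (~~ _) => apply/eqP | |- is_true (_ == _) => apply/eqP end]);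
  repeat match goal with
  | H : is_true (_ < _) |- _ => move/ltP: H => H
  | H : is_true (_ <= _) |- _ => move/leP: H => H
  | H : is_true (?a == ?b) |- _ =>
      match type of a with nat => move/eqP: H => H end
  | H : is_true (~~ (?a == ?b)) |- _ =>
      match type of a with nat => move/eqP: H => H end
  end;
  szfix;
  unfold addn, subn in *; lia.

Section S.
Variable X : finType.
Implicit Types (L : lang X) (w u v a b c : seq X).
Ltac szfix ::= repeat match goal with
  | H : context [@size (Equality.sort ?E) ?s] |- _ =>
      change (@size (Equality.sort E) s) with (@size (Finite.sort X) s) in H
  | |- context [@size (Equality.sort ?E) ?s] =>
      change (@size (Equality.sort E) s) with (@size (Finite.sort X) s)
  end.

Fixpoint allP L (vs : seq (seq X)) : Prop :=
  match vs with [::] => True | v :: vs => L v /\ allP L vs end.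

Lemma allP_cat L (a b : seq (seq X)) : allP L (a ++ b) <-> allP L a /\ allP L b.
Proof. elim: a => [|x a IH] /=; first by tauto. rewrite IH; tauto. Qed.

Lemma pow_cons L i v s : L v -> lpow L i s -> lpow L i.+1 (v ++ s).
Proof.
elim: i s => [|i IH] s Lv /=.
  move=> ->; exists [::], v; rewrite cats0; done.
move=> [s1 [s2 [H1 [H2 ->]]]]; exists (v ++ s1), s2; rewrite catA; split=> //.
exact: IH.
Qed.

Lemma starE L w : lstar L w <-> exists vs, allP L vs /\ w = flatten vs.
Proof.
split.
  move=> [i]; elim: i w => [|i IH] w /=.
    by move=> ->; exists [::].
  move=> [s1 [s2 [H1 [H2 ->]]]]; have [vs [Hvs ->]] := IH _ H1.
  exists (vs ++ [:: s2]); rewrite flatten_cat /= cats0 allP_cat /=; tauto.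
move=> [vs [Hvs ->]]; elim: vs Hvs => [|v vs IH] /=; first by exists 0.
move=> [Lv /IH [i Hi]]; exists i.+1; exact: pow_cons.
Qed.

Lemma prefix_le a b w : prefix a w -> prefix b w -> size a <= size b -> prefix a b.
Proof.
rewrite !prefixE => /eqP Ha /eqP Hb Hab.
by rewrite -Hb take_takel // Ha.
Qed.

Lemma prefix_catl2 a b c : prefix (a ++ b) (a ++ c) = prefix b c.
Proof. by rewrite prefix_catr // eqxx. Qed.

Lemma prefix_split w a b : prefix w (a ++ b) ->
  prefix w a \/ exists w', w = a ++ w' /\ prefix w' b.
Proof.
move/prefixP=> [r E].
have Ew : w = take (size w) (a ++ b) by rewrite E take_size_cat.
move: Ew; rewrite take_cat; case: ltnP => Hl Ew.
  left; rewrite Ew; exact: prefix_take.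
right; exists (take (size w - size a) b); split=> //; exact: prefix_take.
Qed.

Variable q : seq X.
Hypothesis hq : q != [::].

Lemma Pq_q : Pq q q.
Proof.
split=> //; first exact: prefix_refl. split; first exact: prefix_prefix.
apply/eqP => /(congr1 size); rewrite size_cat => E; have := hq; rewrite -size_eq0 => H. slia.
Qed.

Lemma shiftA v s : Pq q v -> prefix q s -> prefix q (v ++ s).
Proof.
move=> [_ _ [H _]] Hs; apply: (prefix_trans H); by rewrite prefix_catl2.
Qed.

Lemma lemB vs : allP (Pq q) vs -> prefix q (flatten vs ++ q).
Proof.
elim: vs => [|v vs IH] /=; first by move=> _; exact: prefix_refl.
move=> [Hv /IH H]; rewrite -catA; exact: shiftA.
Qed.

Lemma qp_of vs : allP (Pq q) vs -> quasiperiodic q (flatten vs ++ q).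
Proof.
elim: vs => [|v vs IH] /=.
  move=> _ j Hj; exists [::]; split=> //; [exact: prefix0s|exact: prefix_refl].
move=> [Hv Hvs]; have Hq := lemB Hvs; have IHq := IH Hvs.
have [_ Hvq _] := Hv; have Hsv := size_prefix Hvq.
rewrite -catA => j Hj.
case: (ltnP j (size v)) => Hjv.
  exists [::]; split=> //; [exact: prefix0s| rewrite /= add0n; exact: leq_trans Hjv Hsv | exact: shiftA].
have Hj' : j - size v < size (flatten vs ++ q) by move: Hj; rewrite size_cat; slia.
have [u [H1 H2 H3 H4]] := IHq _ Hj'.
exists (v ++ u); split.
- by rewrite prefix_catl2.
- rewrite size_cat; slia.
- rewrite size_cat; slia.
- by rewrite -catA prefix_catl2.
Qed.

Lemma qp_last w : quasiperiodic q w -> w != [::] -> exists u, w = u ++ q.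
Proof.
move=> Hw Hne; have Hj : (size w).-1 < size w by move: Hne; rewrite -size_eq0; slia.
have [u [_ H2 _ H4]] := Hw _ Hj; exists u.
have Hs := size_prefix H4; move/prefixP: H4 => [r Er].
have : size r = 0 by move: Hs H2 (congr1 size Er); rewrite !size_cat; slia.
by move/eqP; rewrite size_eq0 => /eqP Hr; rewrite Er Hr cats0.
Qed.

Lemma catsI a b : a ++ q = b ++ q -> a = b.
Proof.
move=> E; have Hs : size a = size b by move: (congr1 size E); rewrite !size_cat; slia.
by rewrite -(take_size_cat q (erefl (size a))) E take_size_cat.
Qed.

Lemma of_qp w : quasiperiodic q w -> w != [::] ->
  exists vs, allP (Pq q) vs /\ w = flatten vs ++ q.
Proof.
have := hq; rewrite -size_eq0 => hq0.
have [n Hn] := ubnP (size w); elim: n w Hn => [|n IH] w Hn //.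
move=> Hw Hne; have [u Eu] := qp_last Hw Hne.
case: (eqVneq u [::]) => Hu0.
  by exists [::]; split=> //; rewrite Eu Hu0.
have Hu : 0 < size u by rewrite lt0n size_eq0.
have Hsw : size w = size u + size q by rewrite Eu size_cat.
have Hj : (size u).-1 < size w by slia.
have [u1 [H1 H2 H3 H4]] := Hw _ Hj.
have Hw1 : quasiperiodic q (u1 ++ q).
  move=> j' Hj'; rewrite size_cat in Hj'.
  case: (ltnP j' (size u1)) => Hc.
    have Hj'w : j' < size w by slia.
    have [u2 [G1 G2 G3 G4]] := Hw _ Hj'w.
    exists u2; split=> //.
    + apply: (prefix_le G1 H4); rewrite size_cat; slia.
    + apply: (prefix_le G4 H4); rewrite !size_cat; slia.
  exists u1; split; [exact: prefix_prefix | slia | done | exact: prefix_refl].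
have Hne1 : u1 ++ q != [::] by rewrite -size_eq0 size_cat; slia.
have Hn1 : size (u1 ++ q) < n by rewrite size_cat; slia.
have [vs1 [Hvs1 E1]] := IH _ Hn1 Hw1 Hne1.
have Eu1 := catsI E1.
have Hpu : prefix u1 u.
  apply: (prefix_le (catl_prefix H4)); last slia.
  by rewrite Eu; exact: prefix_prefix.
move/prefixP: Hpu => [d Ed].
have Hsd : size d = size u - size u1 by rewrite Ed size_cat; slia.
have Hdq : prefix q (d ++ q) by move: H4; rewrite Eu Ed -catA prefix_catl2.
have HPd : Pq q d.
  split.
  - rewrite -size_eq0; slia.
  - apply: (prefix_le (prefix_prefix d q) Hdq); slia.
  - split=> //; apply/eqP => /(congr1 size); rewrite size_cat => E; slia.
exists (rcons vs1 d); split.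
  by rewrite -cats1 allP_cat /=.
by rewrite flatten_rcons Eu Ed Eu1.
Qed.

Lemma pref_dec vs w : allP (Pq q) vs -> prefix w (flatten vs ++ q) ->
  exists vs' p, [/\ allP (Pq q) vs', prefix p q & w = flatten vs' ++ p].
Proof.
elim: vs w => [|v vs IH] w /=.
  by move=> _ Hw; exists [::], w.
move=> [Hv Hvs]; rewrite -catA => /prefix_split [Hw|[w' [-> Hw']]].
  have [_ Hvq _] := Hv; exists [::], w; split=> //; exact: prefix_trans Hw Hvq.
have [vs' [p [H1 H2 ->]]] := IH _ Hvs Hw'.
by exists (v :: vs'), p; rewrite /= catA.
Qed.
End S.

Theorem proposition1 (X : finType) (hX : 1 < #|X|) (q : seq X) (hq : q != [::]) :
  [/\ leq_lang (Qq q) (fun w => lcat (lstar (Pq q)) (lsing q) w \/ w = [::]),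
      lsub (fun w => lcat (lstar (Pq q)) (lsing q) w \/ w = [::]) (lstar (Pq q)),
      leq_lang (lpref (lstar (Pq q))) (lpref (Qq q))
    & leq_lang (lpref (Qq q)) (lcat (lstar (Pq q)) (lpref (lsing q)))].
Proof.
have Hc1 : leq_lang (Qq q) (fun w => lcat (lstar (Pq q)) (lsing q) w \/ w = [::]).
  move=> w; split.
  - move=> Hw; case: (eqVneq w [::]) => [->|Hne]; [by right|left].
    have [vs [Hvs ->]] := of_qp hq Hw Hne.
    exists (flatten vs), q; split; last by split.
    by apply/starE; exists vs.
  - move=> [[u [v [Hu [Hv ->]]]] | ->]; last by move=> j.
    rewrite /lsing in Hv; subst v.
    have [vs [Hvs ->]] := (starE _ _).1 Hu; exact: qp_of.
have Hc2 : lsub (fun w => lcat (lstar (Pq q)) (lsing q) w \/ w = [::]) (lstar (Pq q)).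
  move=> w [[u [v [Hu [Hv ->]]]] | ->]; last by exists 0.
  rewrite /lsing in Hv; subst v.
  have [vs [Hvs ->]] := (starE _ _).1 Hu.
  apply/starE; exists (rcons vs q); rewrite flatten_rcons -cats1 allP_cat /=.
  by split=> //; split=> //; split=> //; exact: Pq_q.
split=> //.
- move=> w; split.
  + move=> [eta [Heta Hp]]; exists (eta ++ q); split.
      by apply/Hc1; left; exists eta, q.
    exact: prefix_trans Hp (prefix_prefix _ _).
  + move=> [eta [Heta Hp]]; exists eta; split=> //; exact/Hc2/Hc1.
- move=> w; split.
  + move=> [eta [/Hc1 [[u [v [Hu [Hv E]]]] | E] Hp]].
      rewrite /lsing in Hv; subst v; subst eta.
      have [vs [Hvs Eu]] := (starE _ _).1 Hu; subst u.
      have [vs' [p [H1 H2 ->]]] := pref_dec Hvs Hp.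
      exists (flatten vs'), p; split; first by apply/starE; exists vs'.
      by split=> //; exists q.
    subst eta; move: Hp; rewrite prefixs0 => /eqP ->.
    exists [::], [::]; split; first by exists 0.
    by split=> //; exists q; split=> //; exact: prefix0s.
  + move=> [u [p [Hu [[eta [Heq Hpe]] ->]]]].
    rewrite /lsing in Heq; subst eta.
    exists (u ++ q); split; first by apply/Hc1; left; exists u, q.
    by rewrite prefix_catl2.
Qed.
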